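(* For every $d=1,\dots,\mathbf d-1$ and all $m,n\in\mathcal M$, the function $x\mapsto\mathcal V^n_{d+1}(x,y_d,b^{mn}_{d+1})$ (with $y_d$ and $b^{mn}_{d+1}$ fixed) is convex.
   Context: Let $\mathbf d\ge2$, $\mathcal M$ a finite set of states, $\Omega$ a finite set of scenarios with $\pi^\omega=1/|\Omega|$; $\pi^{lm}_d\ge0$ with $\sum_m\pi^{lm}_d=1$. For each $d$: cost vector $c_d$, matrices $A_d,C_d$, a bilinear map $(x,b)\mapsto x^\top B_db$ into the right-hand-side space, and a set $\mathcal Y_d$, given by linear constraints (possibly linking scenarios), of decisions $y_d=(y^\omega_d)_{\omega\in\Omega}$. Data vectors $b^{lm\omega}_d$; write $b^{lm}_d=(b^{lm\omega}_d)_{\omega\in\Omega}$. Define $\mathcal V^m_{\mathbf d}(x,y_{\mathbf d-1},b^{lm}_{\mathbf d})=\min_{y_{\mathbf d}\in\mathcal Y_{\mathbf d}}\sum_\omega\pi^\omega c_{\mathbf d}^\top y^\omega_{\mathbf d}$ s.t. $A_{\mathbf d}y^\omega_{\mathbf d}\le x^\top B_{\mathbf d}b^{lm\omega}_{\mathbf d}+C_{\mathbf d}y_{\mathbf d-1}$ for all $\omega$, and for $2\le d\le\mathbf d-1$, $\mathcal V^m_d(x,y_{d-1},b^{lm}_d)=\min_{y_d\in\mathcal Y_d}\sum_\omega\pi^\omega\big(c_d^\top y^\omega_d+\sum_n\pi^{mn}_{d+1}\mathcal V^n_{d+1}(x,y^\omega_d,b^{mn}_{d+1})\big)$ s.t.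 $A_dy^\omega_d\le x^\top B_db^{lm\omega}_d+C_dy_{d-1}$ for all $\omega$ (the argument $y_{d-1}$ is a single-scenario vector). Standing assumption: relatively complete recourse (all these problems feasible with finite optimal value for all arguments considered). *)

(* Defs.v *)
From HB Require Import structures.
From mathcomp Require Import all_boot all_order all_algebra.
From mathcomp Require Import boolp classical_sets reals.
Import Order.TTheory GRing.Theory Num.Theory.
Local Open Scope ring_scope.
Local Open Scope classical_set_scope.

(* For stage d:
     kd d = dimension of a single-scenario decision y_d^omega,
     rd d = number of rows of the stage-d constraints A_d y <= x^T B_d b + C_d y_{d-1},
     qd d = dimension of the data vectors b_d^{lm omega},
     sd d = number of linear constraints defining the set Y_d. *)
Record msp_data (R : realType) (Omega M : finType) (p : nat) := MSPData {
  kd : nat -> nat;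
  rd : nat -> nat;
  qd : nat -> nat;
  sd : nat -> nat;
  cost : forall d, 'cV[R]_(kd d);
  Amat : forall d, 'M[R]_(rd d, kd d);
  Cmat : forall d, 'M[R]_(rd d, kd d.-1);
  Bmat : forall d, 'I_(rd d) -> 'M[R]_(p, qd d);      (* (x^T B_d b)_i = x^T (Bmat d i) b *)
  Gmat : forall d, Omega -> 'M[R]_(sd d, kd d);       (* Y_d = {y | sum_w G_d^w y^w <= g_d} *)
  gvec : forall d, 'cV[R]_(sd d);
  prob : nat -> M -> M -> R;                           (* prob d l m = pi^{lm}_d *)
  bdata : forall d, M -> M -> Omega -> 'cV[R]_(qd d)  (* bdata d l m w = b^{lm w}_d *)
}.


Arguments kd {R Omega M p} _.
Arguments rd {R Omega M p} _.
Arguments qd {R Omega M p} _.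
Arguments sd {R Omega M p} _.
Arguments cost {R Omega M p} _.
Arguments Amat {R Omega M p} _.
Arguments Cmat {R Omega M p} _.
Arguments Bmat {R Omega M p} _.
Arguments Gmat {R Omega M p} _.
Arguments gvec {R Omega M p} _.
Arguments prob {R Omega M p} _.
Arguments bdata {R Omega M p} _.


Section MSP.
Variables (R : realType) (Omega M : finType) (p : nat).
Variable P : msp_data R Omega M p.

Definition bil d (x : 'cV[R]_p) (bb : 'cV[R]_(qd P d)) : 'cV[R]_(rd P d) :=
  \col_i ((x^T *m Bmat P d i *m bb) 0 0).

Definition piO : R := 1 / (#|Omega|%:R).

Definition lin n (c y : 'cV[R]_n) : R := (c^T *m y) 0 0.

Definition inY d (y : Omega -> 'cV[R]_(kd P d)) : Prop :=
  forall j, (\sum_w (Gmat P d w *m y w)) j 0 <= gvec P d j 0.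

Definition feas d (x : 'cV[R]_p) (yprev : 'cV[R]_(kd P d.-1))
    (bb : Omega -> 'cV[R]_(qd P d)) (y : Omega -> 'cV[R]_(kd P d)) : Prop :=
  inY d y /\
  forall w i, (Amat P d *m y w) i 0 <= (bil d x (bb w) + Cmat P d *m yprev) i 0.

Definition stage_vals d (x : 'cV[R]_p) (yprev : 'cV[R]_(kd P d.-1))
    (bb : Omega -> 'cV[R]_(qd P d)) (cont : 'cV[R]_(kd P d) -> R) : set R :=
  [set v | exists y, feas d x yprev bb y /\
     v = \sum_w piO * (lin (kd P d) (cost P d) (y w) + cont (y w))].

(* t = number of remaining stages after stage d *)
Fixpoint Vaux (t d : nat) (m : M) (x : 'cV[R]_p) (yprev : 'cV[R]_(kd P d.-1))
    (bb : Omega -> 'cV[R]_(qd P d)) {struct t} : R :=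
  match t with
  | 0 => inf (stage_vals d x yprev bb (fun _ => 0))
  | t'.+1 => inf (stage_vals d x yprev bb
       (fun yd => \sum_n prob P d.+1 m n * Vaux t' d.+1 n x yd (bdata P d.+1 m n)))
  end.

Definition Vvals (Dbf d : nat) (m : M) (x : 'cV[R]_p) (yprev : 'cV[R]_(kd P d.-1))
    (bb : Omega -> 'cV[R]_(qd P d)) : set R :=
  match (Dbf - d)%N with
  | 0 => stage_vals d x yprev bb (fun _ => 0)
  | t'.+1 => stage_vals d x yprev bb
       (fun yd => \sum_n prob P d.+1 m n * Vaux t' d.+1 n x yd (bdata P d.+1 m n))
  end.

Definition V (Dbf d : nat) (m : M) (x : 'cV[R]_p) (yprev : 'cV[R]_(kd P d.-1))
    (bb : Omega -> 'cV[R]_(qd P d)) : R :=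
  Vaux (Dbf - d) d m x yprev bb.

Definition rel_complete_recourse (Dbf : nat) : Prop :=
  forall d, (2 <= d <= Dbf)%N -> forall (l m : M) (x : 'cV[R]_p)
    (yprev : 'cV[R]_(kd P d.-1)),
    Vvals Dbf d m x yprev (bdata P d l m) !=set0 /\
    has_lbound (Vvals Dbf d m x yprev (bdata P d l m)).

End MSP.

Arguments bil {R Omega M p}.
Arguments piO {R} Omega.
Arguments lin {R}.
Arguments inY {R Omega M p}.
Arguments feas {R Omega M p}.
Arguments stage_vals {R Omega M p}.
Arguments Vaux {R Omega M p}.
Arguments Vvals {R Omega M p}.
Arguments V {R Omega M p}.
Arguments rel_complete_recourse {R Omega M p}.

(* Main.v *)
Require Import Defs.
From HB Require Import structures.
From mathcomp Require Import all_boot all_order all_algebra.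
From mathcomp Require Import boolp classical_sets reals.
From mathcomp Require Import ring lra zify.
Import Order.TTheory GRing.Theory Num.Theory.
Local Open Scope ring_scope.
Local Open Scope classical_set_scope.

Lemma inf_comb (R : realType) (A B : set R) (c t : R) :
  0 <= t <= 1 -> A !=set0 -> has_lbound A -> B !=set0 -> has_lbound B ->
  (forall a b, A a -> B b -> c <= t * a + (1 - t) * b) ->
  c <= t * inf A + (1 - t) * inf B.
Proof.
move=> /andP[t0 t1] An Al Bn Bl H; apply/ler_addgt0Pr => e e0.
have [a Aa ha] := inf_adherent e0 (conj An Al).
have [b Bb hb] := inf_adherent e0 (conj Bn Bl).
apply: (le_trans (H a b Aa Bb)).
have h1 : t * a <= t * (inf A + e) by apply: ler_wpM2l => //; exact: ltW.
have h2 : (1 - t) * b <= (1 - t) * (inf B + e) by apply: ler_wpM2l; [lra| exact: ltW].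
lra.
Qed.

Section S.
Variables (R : realType) (Omega M : finType) (p : nat) (P : msp_data R Omega M p).

Lemma bil_comb d (x1 x2 : 'cV[R]_p) bb t i :
  bil P d (t *: x1 + (1 - t) *: x2) bb i 0 = t * bil P d x1 bb i 0 + (1 - t) * bil P d x2 bb i 0.
Proof.
have E : forall x, bil P d x bb i 0 = (x^T *m Bmat P d i *m bb) 0 0 by move=> x; rewrite mxE.
rewrite !E linearD /= !linearZ /= !mulmxDl -!scalemxAl.
by rewrite [LHS]mxE !mxE.
Qed.

Lemma mul_comb m n (A : 'M[R]_(m, n)) (y1 y2 : 'cV[R]_n) t i :
  (A *m (t *: y1 + (1 - t) *: y2)) i 0 = t * (A *m y1) i 0 + (1 - t) * (A *m y2) i 0.
Proof. by rewrite mulmxDr -!scalemxAr !mxE. Qed.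

Lemma stage_step d (x1 x2 : 'cV[R]_p) (yp1 yp2 : 'cV[R]_(kd P d.-1)) bb
   (c0 c1 c2 : 'cV[R]_(kd P d) -> R) t :
  0 <= t <= 1 ->
  (forall y1 y2, c0 (t *: y1 + (1 - t) *: y2) <= t * c1 y1 + (1 - t) * c2 y2) ->
  has_lbound (stage_vals P d (t *: x1 + (1 - t) *: x2) (t *: yp1 + (1 - t) *: yp2) bb c0) ->
  stage_vals P d x1 yp1 bb c1 !=set0 -> has_lbound (stage_vals P d x1 yp1 bb c1) ->
  stage_vals P d x2 yp2 bb c2 !=set0 -> has_lbound (stage_vals P d x2 yp2 bb c2) ->
  inf (stage_vals P d (t *: x1 + (1 - t) *: x2) (t *: yp1 + (1 - t) *: yp2) bb c0)
  <= t * inf (stage_vals P d x1 yp1 bb c1) + (1 - t) * inf (stage_vals P d x2 yp2 bb c2).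
Proof.
move=> /[dup] ht /andP[t0 t1] hc L0 n1 l1 n2 l2.
apply: inf_comb => // _ _ [y1 [[Y1 F1] ->]] [y2 [[Y2 F2] ->]].
pose yt w := t *: y1 w + (1 - t) *: y2 w.
have hp : 0 <= piO Omega :> R by rewrite /piO mul1r invr_ge0.
apply: (le_trans (ge_inf L0 _)).
  exists yt; split => //; split.
  - move=> j; have := Y1 j; have := Y2 j.
    have -> : \sum_w (Gmat P d w *m yt w) = t *: \sum_w (Gmat P d w *m y1 w) + (1 - t) *: \sum_w (Gmat P d w *m y2 w).
      by rewrite !scaler_sumr -big_split /=; apply: eq_bigr => w _; rewrite mulmxDr -!scalemxAr.
    rewrite !mxE => h2 h1.
    have := ler_wpM2l t0 h1; have : 0 <= 1 - t by lra.
    move/ler_wpM2l/(_ _ _ h2); lra.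
  - move=> w i; have h1 := F1 w i; have h2 := F2 w i.
    have addE : forall m n (A B : 'M[R]_(m,n)) i j, (A+B) i j = A i j + B i j by move=> *; rewrite mxE.
    rewrite !addE in h1 h2 *; rewrite mul_comb bil_comb mul_comb.
    have := ler_wpM2l t0 h1; have : 0 <= 1 - t by lra.
    move/ler_wpM2l/(_ _ _ h2); lra.
rewrite !mulr_sumr -big_split /=; apply: ler_sum => w _.
have hl : lin (kd P d) (cost P d) (yt w) = t * lin _ (cost P d) (y1 w) + (1 - t) * lin _ (cost P d) (y2 w).
  by rewrite /lin /yt mul_comb.
rewrite hl.
have := hc (y1 w) (y2 w); rewrite -/(yt w) => h.
have := ler_wpM2l hp h.
move: (piO Omega) => q hq.
have -> : t * (q * (lin (kd P d) (cost P d) (y1 w) + c1 (y1 w))) + (1 - t) * (q * (lin (kd P d) (cost P d) (y2 w) + c2 (y2 w)))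
  = q * (t * lin (kd P d) (cost P d) (y1 w) + (1 - t) * lin (kd P d) (cost P d) (y2 w)) + q * (t * c1 (y1 w) + (1 - t) * c2 (y2 w)) by ring.
rewrite mulrDr lerD2l; exact: hq.
Qed.
End S.

Theorem lemma12 (R : realType) (Omega M : finType) (p : nat)
  (P : msp_data R Omega M p) (Dbf : nat) :
  (2 <= Dbf)%N ->
  (forall d l m, 0 <= prob P d l m) ->
  (forall d l, \sum_m prob P d l m = 1) ->
  rel_complete_recourse P Dbf ->
  forall d, (1 <= d <= Dbf.-1)%N ->
  forall (m n : M) (yd : 'cV[R]_(kd P d)) (x1 x2 : 'cV[R]_p) (t : R),
    0 <= t <= 1 ->
    V P Dbf d.+1 n (t *: x1 + (1 - t) *: x2) yd (bdata P d.+1 m n)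
    <= t * V P Dbf d.+1 n x1 yd (bdata P d.+1 m n)
       + (1 - t) * V P Dbf d.+1 n x2 yd (bdata P d.+1 m n).
Proof.
move=> hD hpr _ hrc.
have claim : forall k d, (2 <= d)%N -> (d + k = Dbf)%N -> forall l m x1 x2
    (yp1 yp2 : 'cV[R]_(kd P d.-1)) s, 0 <= s <= 1 ->
    Vaux P k d m (s *: x1 + (1 - s) *: x2) (s *: yp1 + (1 - s) *: yp2) (bdata P d l m)
    <= s * Vaux P k d m x1 yp1 (bdata P d l m) + (1 - s) * Vaux P k d m x2 yp2 (bdata P d l m).
  elim=> [|k IH] d hd2 hdk l m x1 x2 yp1 yp2 s hs.
  - have hV : forall x yp, stage_vals P d x yp (bdata P d l m) (fun _ => 0) !=set0 /\
        has_lbound (stage_vals P d x yp (bdata P d l m) (fun _ => 0)).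
      move=> x yp; have := hrc d _ l m x yp; rewrite /Vvals.
      have -> : (Dbf - d = 0)%N by lia.
      apply; apply/andP; split => //; lia.
    have [n1 l1] := hV x1 yp1; have [n2 l2] := hV x2 yp2.
    apply: stage_step => //; last by case: (hV (s *: x1 + (1 - s) *: x2) (s *: yp1 + (1 - s) *: yp2)).
    move=> _ _; lra.
  - have hV : forall x yp, let S := stage_vals P d x yp (bdata P d l m)
       (fun yd => \sum_n prob P d.+1 m n * Vaux P k d.+1 n x yd (bdata P d.+1 m n)) in
       S !=set0 /\ has_lbound S.
      move=> x yp; have := hrc d _ l m x yp; rewrite /Vvals.
      have -> : (Dbf - d = k.+1)%N by lia.
      apply; apply/andP; split => //; lia.
    have [n1 l1] := hV x1 yp1; have [n2 l2] := hV x2 yp2.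
    apply: stage_step => //; last by case: (hV (s *: x1 + (1 - s) *: x2) (s *: yp1 + (1 - s) *: yp2)).
    move=> y1 y2.
    rewrite !mulr_sumr -big_split /=; apply: ler_sum => n _.
    have := IH d.+1 ltac:(lia) ltac:(lia) m n x1 x2 y1 y2 s hs.
    move/(ler_wpM2l (hpr d.+1 m n)) => h; apply: (le_trans h); rewrite /= -/(d.+1.-1).
    rewrite mulrDr !mulrA (mulrC s) (mulrC (1 - s)).
    by [].
move=> d hd m n yd x1 x2 t ht.
have := claim (Dbf - d.+1)%N d.+1 ltac:(lia) ltac:(lia) m n x1 x2 yd yd t ht.
rewrite -scalerDl subrKC scale1r.
by [].
Qed.
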